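(* Let $n\in\mathbb N$ and $0<\gamma\le1/20$. Let $G$ be a graph of order $n$ with $(1/2-\gamma)n\le\delta(G)\le\Delta(G)\le3n/5$. Suppose that $|N(x)\triangle N(y)|\le\gamma n$ for every edge $xy\in E(G)$. Then there exists a bipartition $X,Y$ of $V(G)$ such that $\delta(G[X]),\delta(G[Y])\ge(1/2-5\gamma)n$ and $(1/2-5\gamma)n\le|X|,|Y|\le(1/2+5\gamma)n$.
   Context: $\delta(G)$ and $\Delta(G)$ are the minimum and maximum degree of $G$, $N(x)$ is the neighbourhood of $x$, and $\triangle$ denotes symmetric difference. *)

(* Defs.v *)
From HB Require Import structures.
From mathcomp Require Import all_boot all_order all_algebra.
Set Implicit Arguments. Unset Strict Implicit. Unset Printing Implicit Defensive.
Import Order.TTheory GRing.Theory Num.Theory.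

Definition simple_graph (T : finType) (e : rel T) : Prop :=
  symmetric e /\ irreflexive e.

Definition nbhd (T : finType) (e : rel T) (x : T) : {set T} := [set y | e x y].

Definition deg (T : finType) (e : rel T) (x : T) : nat := #|nbhd e x|.

Definition deg_in (T : finType) (e : rel T) (X : {set T}) (x : T) : nat :=
  #|nbhd e x :&: X|.

Definition symdiff (T : finType) (A B : {set T}) : {set T} := (A :\: B) :|: (B :\: A).

(* Main.v *)
Require Import Defs.
From HB Require Import structures.
From mathcomp Require Import all_boot all_order all_algebra.
From mathcomp Require Import zify ring lra.
Import Order.TTheory GRing.Theory Num.Theory.

Lemma cardU_le {T : finType} (A B : {set T}) : (#|A :|: B| <= #|A| + #|B|)%N.
Proof. rewrite cardsU; lia. Qed.

Lemma symdiff_tri {T : finType} (A B C : {set T}) :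
  (#|symdiff A C| <= #|symdiff A B| + #|symdiff B C|)%N.
Proof.
apply: (@leq_trans #|symdiff A B :|: symdiff B C|); last exact: cardU_le.
apply: subset_leq_card.
apply/subsetP => z; rewrite /symdiff !inE.
by case: (z \in A); case: (z \in B); case: (z \in C).
Qed.

Lemma card_le_I_sd {T : finType} (A B : {set T}) :
  (#|A| <= #|A :&: B| + #|symdiff A B|)%N.
Proof.
apply: (@leq_trans #|(A :&: B) :|: symdiff A B|); last exact: cardU_le.
apply: subset_leq_card.
apply/subsetP => z; rewrite /symdiff !inE.
by case: (z \in A); case: (z \in B).
Qed.

Lemma card_disj_sd {T : finType} (A B : {set T}) :
  A :&: B = set0 -> (#|A| + #|B| <= #|symdiff A B|)%N.
Proof.
move=> H; have h1 := cardsID B A; have h2 := cardsID A B.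
rewrite H cards0 in h1; rewrite setIC H cards0 in h2.
rewrite /symdiff cardsU.
have -> : (A :\: B) :&: (B :\: A) = set0.
  by apply/setP => z; rewrite !inE; case: (z \in A); case: (z \in B).
rewrite cards0; lia.
Qed.

Lemma symdiffC {T : finType} (A B : {set T}) : symdiff A B = symdiff B A.
Proof. by rewrite /symdiff setUC. Qed.

Local Open Scope ring_scope.

Lemma deg_sum {T : finType} (e : rel T) y : deg e y = (\sum_z (e y z : nat))%N.
Proof.
rewrite /deg /nbhd -sum1_card big_mkcond /=; apply: eq_bigr => z _.
by rewrite inE; case: (e y z).
Qed.

Lemma double_count {T : finType} (e : rel T) x : symmetric e ->
  (\sum_z #|nbhd e x :&: nbhd e z| = \sum_(y in nbhd e x) deg e y)%N.
Proof.
move=> es.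
transitivity (\sum_z \sum_(y in nbhd e x) (e z y : nat))%N.
  apply: eq_bigr => z _; rewrite -sum1_card big_mkcond [RHS]big_mkcond /=.
  by apply: eq_bigr => y _; rewrite !inE; case: (e x y); case: (e z y).
rewrite exchange_big /=; apply: eq_bigr => y _; rewrite deg_sum.
by apply: eq_bigr => z _; rewrite es.
Qed.

Lemma ar1 {R : realFieldType} {d g n : R} : 0 < n -> g * n <= 1 / 20 * n ->
  (1 / 2 - g) * n <= d -> 2 / 5 * d - 2 * g * n <= 0 -> False.
Proof. move=> *; lra. Qed.

Lemma ar01 {R : realFieldType} {d g n : R} : 0 < n -> g * n <= 1 / 20 * n ->
  (1 / 2 - g) * n <= d -> (d - 2 * g * n) * n <= 3 / 5 * n * d -> False.
Proof.
move=> n0 gn m S3.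
have h : (2 / 5 * d - 2 * g * n) * n <= 0.
  have -> : (2 / 5 * d - 2 * g * n) * n = (d - 2 * g * n) * n - 3 / 5 * n * d by field.
  by rewrite subr_le0.
rewrite pmulr_lle0 // in h.
exact: (ar1 n0 gn m h).
Qed.

Lemma ar_deg {R : realFieldType} {d g n : R} : 0 <= g * n ->
  (1 / 2 - g) * n <= d -> (1 / 2 - 5 * g) * n <= d.
Proof. move=> *; lra. Qed.

Lemma ar_size {R : realFieldType} {dx dy a b g n : R} : 0 <= g * n ->
  (1 / 2 - g) * n <= dx -> (1 / 2 - g) * n <= dy -> dx <= a -> dy <= b -> a + b = n ->
  (1 / 2 - 5 * g) * n <= a /\ a <= (1 / 2 + 5 * g) * n.
Proof. move=> *; split; lra. Qed.

Theorem proposition5p5 (R : realFieldType) (T : finType) (e : rel T) (gamma : R) :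
  simple_graph e ->
  0 < gamma -> gamma <= 1 / 20 ->
  (forall x : T, (1 / 2 - gamma) * #|T|%:R <= (deg e x)%:R) ->
  (forall x : T, (deg e x)%:R <= 3 / 5 * (#|T|%:R : R)) ->
  (forall x y : T, e x y -> (#|symdiff (nbhd e x) (nbhd e y)|)%:R <= gamma * #|T|%:R) ->
  exists X Y : {set T},
    [/\ X :&: Y = set0 /\ X :|: Y = setT,
        (forall x, x \in X -> (1 / 2 - 5 * gamma) * #|T|%:R <= (deg_in e X x)%:R),
        (forall y, y \in Y -> (1 / 2 - 5 * gamma) * #|T|%:R <= (deg_in e Y y)%:R),
        (1 / 2 - 5 * gamma) * #|T|%:R <= #|X|%:R /\ #|X|%:R <= (1 / 2 + 5 * gamma) * #|T|%:R
      & (1 / 2 - 5 * gamma) * #|T|%:R <= #|Y|%:R /\ #|Y|%:R <= (1 / 2 + 5 * gamma) * #|T|%:R].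
Proof.
move=> [esym eirr] g0 g1 Hmin Hmax Hsd.
case: (pickP (@predT T)) => [x _|Hno]; last first.
  have c0 : #|T| = 0%N by apply: eq_card0.
  exists set0, set0; rewrite c0 !mulr0 cards0; split => //.
  split; first by rewrite setI0.
  by apply/setP => z; have := Hno z.
set nR := (#|T|%:R : R).
have npos : 0 < nR.
  rewrite ltr0n; apply/card_gt0P; by exists x.
have gn : gamma * nR <= 1 / 20 * nR by rewrite ler_wpM2r // ltW.
have close2 : forall z, nbhd e z :&: nbhd e x != set0 ->
    (#|symdiff (nbhd e z) (nbhd e x)|)%:R <= 2 * gamma * nR.
  move=> z /set0Pn [u]; rewrite !inE => /andP [ezu exu].
  have t := symdiff_tri (nbhd e z) (nbhd e u) (nbhd e x).
  have h1 := Hsd _ _ ezu.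
  have h2 : e u x by rewrite esym.
  have h3 := Hsd _ _ h2.
  move: t; rewrite -(ler_nat R) natrD => t.
  lra.
set X := [set z | nbhd e z :&: nbhd e x != set0].
have closure : forall z w, e z w -> z \in X -> w \in X.
  move=> z w ezw; rewrite !inE => zX; apply/negP => /eqP wX.
  have t := card_disj_sd _ _ wX.
  have t2 := symdiff_tri (nbhd e w) (nbhd e z) (nbhd e x).
  have h1 := close2 _ zX.
  have h2 : e w z by rewrite esym.
  have h3 := Hsd _ _ h2.
  have m1 := Hmin w; have m2 := Hmin x.
  move: t t2; rewrite -!(ler_nat R) !natrD => t t2.
  rewrite /deg in m1 m2.
  lra.
have xX : x \in X.
  rewrite inE setIid; apply/set0Pn/card_gt0P.
  have := Hmin x; rewrite /deg => m.
  rewrite -(ltr0n R); lra.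
have NxX : nbhd e x \subset X.
  by apply/subsetP => w; rewrite inE => exw; apply: closure exw xX.
have [y yY] : exists y, y \in ~: X.
  apply/set0Pn/negP => /eqP Y0.
  have allX : forall z, z \in X.
    by move=> z; apply/negPn/negP => zn; have := in_set0 z; rewrite -Y0 inE zn.
  have each : forall z, (deg e x)%:R - 2 * gamma * nR <= (#|nbhd e x :&: nbhd e z|)%:R :> R.
    move=> z; have := allX z; rewrite inE => /close2 c.
    have t := card_le_I_sd (nbhd e x) (nbhd e z).
    move: t; rewrite -(ler_nat R) natrD symdiffC => t.
    rewrite /deg; lra.
  have S1 : \sum_(z : T) ((deg e x)%:R - 2 * gamma * nR) <= \sum_(z : T) (#|nbhd e x :&: nbhd e z|)%:R.
    by apply: ler_sum => z _; exact: each z.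
  rewrite sumr_const -natr_sum double_count // natr_sum in S1.
  have S2 : \sum_(y in nbhd e x) (deg e y)%:R <= \sum_(y in nbhd e x) (3 / 5 * nR).
    by apply: ler_sum => z _; apply: Hmax.
  rewrite sumr_const in S2.
  have S3 : ((deg e x)%:R - 2 * gamma * nR) * nR <= 3 / 5 * nR * (deg e x)%:R.
    move: S1 S2; rewrite -[_ *+ #|nbhd e x|]mulr_natr -[_ *+ #|_|]mulr_natr -/nR -/(deg e x).
    move=> S1 S2; exact: (le_trans S1 S2).
  have m := Hmin x.
  exact: (ar01 npos gn m S3).
exists X, (~: X).
have degX : forall z, z \in X -> deg_in e X z = deg e z.
  move=> z zX; rewrite /deg_in /deg; suff -> : nbhd e z :&: X = nbhd e z by [].
  apply/setIidPl.
  by apply/subsetP => w; rewrite inE => ezw; apply: closure ezw zX.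
have degY : forall z, z \in ~: X -> deg_in e (~: X) z = deg e z.
  move=> z zY; rewrite /deg_in /deg; suff -> : nbhd e z :&: ~: X = nbhd e z by [].
  apply/setIidPl.
  apply/subsetP => w; rewrite inE => ezw; rewrite inE; apply/negP => wX.
  by move: zY; rewrite inE (closure w z) // esym.
have cX : (deg e x <= #|X|)%N by apply: subset_leq_card.
have cY : (deg e y <= #|~: X|)%N.
  apply: subset_leq_card; apply/subsetP => w; rewrite inE => eyw.
  rewrite inE; apply/negP => wX.
  by move: yY; rewrite inE (closure w y) // esym.
have cT := cardsC X.
move: cX cY cT; rewrite -!(ler_nat R) => cX cY.
move/(congr1 (fun k => k%:R : R)); rewrite natrD -/nR => cT.
have mx := Hmin x; have my := Hmin y.
have gn0 : 0 <= gamma * nR by rewrite mulr_ge0 // ltW.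
split.
- by rewrite setICr setUCr.
- by move=> z zX; rewrite degX //; apply: ar_deg gn0 (Hmin z).
- by move=> z zY; rewrite degY //; apply: ar_deg gn0 (Hmin z).
- exact: (ar_size gn0 mx my cX cY cT).
- by apply: (ar_size gn0 my mx cY cX); rewrite addrC.
Qed.
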